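(* Let $g^{bf}$ be the maximum-entropy element of $P$ and let $V=\min_{z\in P}z\cdot\log z$. For every $\theta^{ref}\in\mathbb{R}^m$, $$d(\eta,g^{bf})\;\le\;-V+\eta\cdot\log\eta\;\le\;d\big(\eta,g^{(\theta^{ref})}\big)+2\,\epsilon\cdot|\theta^{ref}|\;\le\;d\big(\eta,g^{(\theta^{ref})}\big)+2\|\epsilon\|_\infty\|\theta^{ref}\|_1,$$ where $|\theta^{ref}|$ is the entrywise absolute value.
   Context: Standard setup. Let $n\ge1$, $k\ge2$, $p\ge1$ be integers and $m=p+k$. There are $n$ data points $x_1,\dots,x_n$ and $p$ rules $h^{(1)},\dots,h^{(p)}$, each a map from $\{x_1,\dots,x_n\}$ to $\{1,\dots,k\}\cup\{?\}$, where ''?'' means abstain. Let $n_j\ge1$ be the number of indices $i$ with $h^{(j)}(x_i)\neq ?$. $\Delta_k$ denotes the probability simplex in $\mathbb{R}^k$; an element $z\in\Delta_k^n\subset\mathbb{R}^{nk}$ is written $z=(z_1,\dots,z_n)$ with $z_i=(z_{i1},\dots,z_{ik})\in\Delta_k$. For $j\le p$ let $h^{(j)}\in\{0,1\}^{nk}$ also denote the vector with $h^{(j)}_{i\ell}=1$ iff $h^{(j)}(x_i)=\ell$; for $\ell\le k$ let $\vec e^{\,n}_\ell\in\{0,1\}^{nk}$ have entries $(\vec e^{\,n}_\ell)_{i\ell'}=\mathbf 1(\ell'=\ell)$. The matrix $A\in\mathbb{R}^{m\times nk}$ has rows $a^{(j)}=h^{(j)}/n_j$ for $1\le j\le p$ and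 $a^{(p+\ell)}=\vec e^{\,n}_\ell/n$ for $1\le\ell\le k$. For $\theta\in\mathbb{R}^m$ put $a^{(\theta)}=A^\top\theta\in\mathbb{R}^{nk}$ (entries $a^{(\theta)}_{i\ell}$) and define $g^{(\theta)}\in\Delta_k^n$ by $g^{(\theta)}_{i\ell}=\exp(a^{(\theta)}_{i\ell})/\sum_{\ell'=1}^k\exp(a^{(\theta)}_{i\ell'})$; let $\mathcal G=\{g^{(\theta)}:\theta\in\mathbb{R}^m\}$. A fixed ''true labeling'' $\eta\in\Delta_k^n$ is given and $b^*:=A\eta\in\mathbb{R}^m$. Given $b\in\mathbb{R}^m$ and $\epsilon\in\mathbb{R}^m$ with $\epsilon\ge0$ and $b-\epsilon\le b^*\le b+\epsilon$ (entrywise), let $P=\{z\in\Delta_k^n:\ b-\epsilon\le Az\le b+\epsilon\}$ (entrywise). Logarithms act entrywise; $z\cdot\log g=\sum_{i,\ell}z_{i\ell}\log g_{i\ell}$ with conventions $0\log 0=0$, $\log 0=-\infty$. The maximum-entropy element of $P$ is the unique minimizer of $z\cdot\log z$ over $P$. For $\mu,\nu\in\Delta_k^n$, $d(\mu,\nu)=\sum_{i=1}^n\mathrm{KL}(\mu_i\|\nu_i)=\sum_{i,\ell}\mu_{i\ell}\log(\mu_{i\ell}/\nu_{i\ell})$, with $0\log(0/x)=0$. *)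

(* Defs.v *)
From HB Require Import structures.
From mathcomp Require Import all_boot all_order all_algebra.
From mathcomp Require Import all_classical all_reals.
From mathcomp Require Import ereal sequences exp.
Set Implicit Arguments. Unset Strict Implicit. Unset Printing Implicit Defensive.
Import Order.TTheory GRing.Theory Num.Theory.
Local Open Scope ring_scope.

Section Defs.
Variable R : realType.
Variables n k p : nat.

Definition vec := 'I_n -> 'I_k -> R.

(* rules: h j i = Some l  iff  h^{(j)}(x_i) = l ;  None = abstain "?" *)
Definition rules := 'I_p -> 'I_n -> option 'I_k.

Definition hvec (h : rules) (j : 'I_p) : vec :=
  fun i l => if h j i == Some l then 1 else 0.

Definition nj (h : rules) (j : 'I_p) : nat := #|[pred i | h j i != None]|.

Definition Arow (h : rules) (r : 'I_(p + k)) : vec :=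
  fun i l => match fintype.split r with
             | inl j => hvec h j i l / (nj h j)%:R
             | inr l' => (if l == l' then 1 else 0) / n%:R
             end.

Definition Amul (h : rules) (z : vec) : 'I_(p + k) -> R :=
  fun r => \sum_(i < n) \sum_(l < k) Arow h r i l * z i l.

Definition atheta (h : rules) (th : 'I_(p + k) -> R) : vec :=
  fun i l => \sum_(r < p + k) th r * Arow h r i l.

Definition gtheta (h : rules) (th : 'I_(p + k) -> R) : vec :=
  fun i l => expR (atheta h th i l) / \sum_(l' < k) expR (atheta h th i l').

Definition in_simplex (z : vec) : Prop :=
  forall i, (forall l, 0 <= z i l) /\ \sum_(l < k) z i l = 1.

Definition inP (h : rules) (b eps : 'I_(p + k) -> R) (z : vec) : Prop :=
  in_simplex z /\ forall r, b r - eps r <= Amul h z r <= b r + eps r.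

Definition xlnx (x : R) : R := if x == 0 then 0 else x * ln x.

Definition negent (z : vec) : R := \sum_(i < n) \sum_(l < k) xlnx (z i l).

Definition klterm (a c : R) : \bar R :=
  if a == 0 then 0%E else if c == 0 then +oo%E else (a * ln (a / c))%:E.

Definition dKL (mu nu : vec) : \bar R :=
  (\sum_(i < n) \sum_(l < k) klterm (mu i l) (nu i l))%E.

Definition dot_abs (eps th : 'I_(p + k) -> R) : R :=
  \sum_(r < p + k) eps r * `|th r|.

Definition norm_inf (v : 'I_(p + k) -> R) : R := \big[Num.max/0]_(r < p + k) `|v r|.
Definition norm_1 (v : 'I_(p + k) -> R) : R := \sum_(r < p + k) `|v r|.

End Defs.

(* Main.v *)
Require Import Defs.
From HB Require Import structures.
From mathcomp Require Import all_boot all_order all_algebra.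
From mathcomp Require Import all_classical all_reals.
From mathcomp Require Import ereal sequences exp.
From mathcomp Require Import ring lra.
Import Order.TTheory GRing.Theory Num.Theory.
Local Open Scope ring_scope.

Section Scal.
Context {R : realType}.

Definition kl (a c : R) : R := if a == 0 then 0 else a * ln (a / c).

Lemma ln_le_sub1 {x : R} : 0 < x -> ln x <= x - 1.
Proof.
move=> x0; have e : 1 + (x - 1) = x by lra.
have := @le_ln1Dx R (x - 1); rewrite e; apply; lra.
Qed.

Lemma gibbs_term {g z : R} : 0 <= g -> 0 < z -> g * ln z <= xlnx g + (z - g).
Proof.
move=> g0 z0; rewrite /xlnx; have [->|gn0] := eqVneq g 0.
  by rewrite mul0r add0r subr0 ltW.
have gp : 0 < g by rewrite lt_def gn0.
have -> : z = g * (z / g) by rewrite mulrC divfK.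
rewrite lnM ?posrE ?divr_gt0 // mulrDr lerD2l.
have := ln_le_sub1 (divr_gt0 z0 gp) => H.
have := ler_wpM2l (ltW gp) H; rewrite mulrBr mulr1 mulrCA divff // mulr1.
Qed.

Lemma kl_lb {e z : R} : 0 <= e -> 0 <= z -> (e != 0 -> 0 < z) -> e - z <= kl e z.
Proof.
move=> e0 z0 hz; rewrite /kl; have [->|en0] := eqVneq e 0; first by lra.
have ep : 0 < e by rewrite lt_def en0.
have zp := hz en0.
have -> : e / z = (z / e)^-1 by rewrite invf_div.
rewrite lnV ?posrE ?divr_gt0 // mulrN.
have := ln_le_sub1 (divr_gt0 zp ep) => H.
have := ler_wpM2l (ltW ep) H.
rewrite mulrBr mulr1 mulrCA divff // mulr1; lra.
Qed.

Lemma lim0 (X C M : R) : (forall t, 0 < t < 1 -> X <= C + t * M) -> X <= C.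
Proof.
move=> H; rewrite leNgt; apply/negP => XC.
set M' := `|M| + 1.
have M'p : 0 < M' by rewrite /M'; have := normr_ge0 M; lra.
set d := X - C.
have dp : 0 < d by rewrite /d; lra.
set t := d / (d + M').
have dM : 0 < d + M' by lra.
have tp : 0 < t by rewrite divr_gt0.
have t1 : t < 1 by rewrite /t ltr_pdivrMr // mul1r; lra.
have := H t; rewrite tp t1 => /(_ isT) HX.
have tM : t * M <= t * M'.
  apply: ler_wpM2l; first exact: ltW.
  rewrite /M'; have := ler_norm M; lra.
have tM' : t * M' < d.
  rewrite /t mulrAC ltr_pdivrMr //; rewrite ltr_pM2l //; lra.
rewrite /d in tM'; lra.
Qed.

Lemma pt (t g e : R) : 0 < t -> t < 1 -> 0 <= g -> 0 <= e ->
  xlnx ((1 - t) * g + t * e) <= (1 - t) * xlnx g + t * xlnx e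
     + (1 - t) * (((1 - t) * g + t * e) - g) - t * kl e ((1 - t) * g + t * e).
Proof.
move=> t0 t1 g0 e0; set z := (1 - t) * g + t * e.
have z0 : 0 <= z by rewrite /z; nra.
have [zz|zn0] := eqVneq z 0.
  have gz : g = 0 by apply/le_anti; rewrite g0 andbT; rewrite /z in zz; nra.
  have ez : e = 0 by apply/le_anti; rewrite e0 andbT; rewrite /z in zz; nra.
  rewrite zz gz ez /xlnx /kl !eqxx; lra.
have zp : 0 < z by rewrite lt_def zn0.
have -> : xlnx z = (1 - t) * (g * ln z) + t * (e * ln z).
  by rewrite /xlnx (negbTE zn0) {1}/z mulrDl !mulrA.
have Hg := gibbs_term g0 zp.
have He : e * ln z = xlnx e - kl e z.
  rewrite /xlnx /kl; have [->|en0] := eqVneq e 0; first by rewrite mul0r subr0.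
  have ep : 0 < e by rewrite lt_def en0.
  by rewrite ln_div ?posrE // mulrBr opprB addrCA subrr addr0.
rewrite He.
have H : (1 - t) * (g * ln z) <= (1 - t) * (xlnx g + (z - g)).
  by apply: ler_wpM2l => //; lra. rewrite mulrDr in H; rewrite mulrBr; lra.
Qed.

Definition Mt (e g : R) : R := if e == 0 then 0 else e * (e / g - 1).

Lemma kl_step {t g e : R} : 0 < t -> t < 1 -> 0 <= g -> 0 <= e -> (e != 0 -> 0 < g) ->
  kl e g - t * Mt e g <= kl e ((1 - t) * g + t * e).
Proof.
move=> t0 t1 g0 e0 hg; rewrite /kl /Mt; have [ez|en0] := eqVneq e 0;  first by rewrite mulr0 subr0.
have ep : 0 < e by rewrite lt_def en0.
have gp := hg en0.
set z := (1 - t) * g + t * e.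
have zp : 0 < z by rewrite /z; nra.
rewrite !ln_div ?posrE //.
have H := ln_le_sub1 (divr_gt0 zp gp).
rewrite ln_div ?posrE // in H.
have E : z / g - 1 = t * (e / g - 1).
  rewrite /z mulrDl mulfK ?gt_eqF // -mulrA mulrBr mulr1; lra.
rewrite E in H.
have := ler_wpM2l (ltW ep) H; rewrite !mulrBr; lra.
Qed.

Lemma kl_t (t e : R) : 0 < t -> 0 < e -> kl e (t * e) = - (e * ln t).
Proof.
move=> t0 e0; rewrite /kl gt_eqF //= invfM mulrCA divff ?gt_eqF // mulr1.
by rewrite lnV ?posrE // mulrN.
Qed.
End Scal.

Section Vec.
Context {R : realType}.
Context {n k p : nat}.
Implicit Types (g e z : vec R n k).

Definition dsum (F : 'I_n -> 'I_k -> R) : R := \sum_(i < n) \sum_(l < k) F i l.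

Lemma dsumD F G : dsum (fun i l => F i l + G i l) = dsum F + dsum G.
Proof. by rewrite /dsum -big_split; apply: eq_bigr => i _; rewrite big_split. Qed.

Lemma dsumB F G : dsum (fun i l => F i l - G i l) = dsum F - dsum G.
Proof. by rewrite /dsum -sumrB; apply: eq_bigr => i _; rewrite sumrB. Qed.

Lemma dsumZ c F : dsum (fun i l => c * F i l) = c * dsum F.
Proof. by rewrite /dsum mulr_sumr; apply: eq_bigr => i _; rewrite mulr_sumr. Qed.

Lemma ler_dsum F G : (forall i l, F i l <= G i l) -> dsum F <= dsum G.
Proof. by move=> H; apply: ler_sum => i _; apply: ler_sum => l _. Qed.

Lemma sum_ge_term (I : finType) (F : I -> R) j : (forall i, 0 <= F i) -> F j <= \sum_i F i.
Proof. by move=> H; rewrite (bigD1 j) //= lerDl; apply: sumr_ge0 => i _. Qed.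

Lemma dsum_ge_term F i0 l0 : (forall i l, 0 <= F i l) -> F i0 l0 <= dsum F.
Proof.
move=> H; apply: le_trans (@sum_ge_term _ (F i0) l0 (H i0)) _.
apply: (@sum_ge_term _ (fun i => \sum_l F i l)) => i; exact: sumr_ge0.
Qed.

Lemma dsum_rows g e : in_simplex g -> in_simplex e -> dsum (fun i l => g i l - e i l) = 0.
Proof.
move=> hg he; rewrite /dsum big1 // => i _; rewrite sumrB (proj2 (hg i)) (proj2 (he i)).
by rewrite subrr.
Qed.

Definition zt (t : R) g e : vec R n k := fun i l => (1 - t) * g i l + t * e i l.

Lemma simplex_zt t g e : 0 <= t <= 1 -> in_simplex g -> in_simplex e -> in_simplex (zt t g e).
Proof.
move=> /andP[t0 t1] hg he i; split.
  move=> l; rewrite /zt; apply: addr_ge0; apply: mulr_ge0; rewrite ?subr_ge0 //.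
    exact: (proj1 (hg i) l).
  exact: (proj1 (he i) l).
rewrite /zt big_split /= -!mulr_sumr (proj2 (hg i)) (proj2 (he i)); lra.
Qed.

Lemma Amul_zt (h : rules n k p) t g e r :
  Amul h (zt t g e) r = (1 - t) * Amul h g r + t * Amul h e r.
Proof.
rewrite /Amul !mulr_sumr -big_split; apply: eq_bigr => i _.
rewrite !mulr_sumr -big_split; apply: eq_bigr => l _.
by rewrite /zt /=; ring.
Qed.

Lemma inP_zt (h : rules n k p) b eps t g e : 0 <= t <= 1 ->
  inP h b eps g -> inP h b eps e -> inP h b eps (zt t g e).
Proof.
move=> ht [hg Hg] [he He]; split; first exact: simplex_zt.
move=> r; rewrite Amul_zt; move: (Hg r) (He r) ht.
move=> /andP[a1 a2] /andP[b1 b2] /andP[t0 t1].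
have u0 : 0 <= 1 - t by lra.
have := ler_wpM2l u0 a1; have := ler_wpM2l u0 a2.
have := ler_wpM2l t0 b1; have := ler_wpM2l t0 b2.
rewrite !mulrBr !mulrDr => *; apply/andP; split; lra.
Qed.

End Vec.
From HB Require Import structures.
From mathcomp Require Import all_boot all_order all_algebra.
From mathcomp Require Import all_classical all_reals.
From mathcomp Require Import ereal sequences exp.
From mathcomp Require Import ring lra.
Import Order.TTheory GRing.Theory Num.Theory.
Local Open Scope ring_scope.

Section Main.
Context {R : realType} {n k p : nat}.
Variable h : rules n k p.
Variables (e g : vec R n k) (b eps : 'I_(p + k) -> R).
Hypothesis he : in_simplex e.
Hypothesis hb : forall r, b r - eps r <= Amul h e r <= b r + eps r.
Hypothesis hgP : inP h b eps g.
Hypothesis hmin : forall z, inP h b eps z -> negent g <= negent z.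

Lemma negent_dsum (z : vec R n k) : negent z = dsum (fun i l => xlnx (z i l)).
Proof. by []. Qed.

Lemma Kbound t : 0 < t -> t < 1 ->
  dsum (fun i l => kl (e i l) (zt t g e i l)) <= negent e - negent g.
Proof.
move=> t0 t1.
have hg := proj1 hgP.
have ht : 0 <= t <= 1 by rewrite !ltW.
have hz := hmin _ (inP_zt h b eps t g e ht hgP (conj he hb)).
have H : negent (zt t g e) <= dsum (fun i l => (1 - t) * xlnx (g i l) + t * xlnx (e i l)
     + (1 - t) * (zt t g e i l - g i l) - t * kl (e i l) (zt t g e i l)).
  apply: ler_dsum => i l; apply: pt => //.
    exact: (proj1 (hg i) l).
  exact: (proj1 (he i) l).
rewrite dsumB !dsumD !dsumZ (dsum_rows _ _ (simplex_zt _ _ _ ht hg he) hg) mulr0 addr0 in H.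
rewrite -!negent_dsum in H.
set S := dsum _ in H *.
have : t * S <= t * (negent e - negent g) by lra.
by rewrite ler_pM2l.
Qed.

Lemma g_pos i0 l0 : e i0 l0 != 0 -> 0 < g i0 l0.
Proof.
move=> en0.
have hg := proj1 hgP.
have e0p : 0 < e i0 l0 by rewrite lt_def en0 (proj1 (he i0) l0).
rewrite lt_def (proj1 (hg i0) l0) andbT; apply/eqP => gz.
set C := negent e - negent g.
set e0 := e i0 l0 in e0p en0.
set s := (`|C| + 1) / e0 + 1.
have sp : 0 < s by rewrite /s; have := normr_ge0 C => ?; rewrite ltr_wpDl // divr_ge0 //; lra.
set t := expR (- s).
have t0 : 0 < t := expR_gt0 _.
have t1 : t < 1 by rewrite /t expR_lt1; lra.
have ht : 0 <= t <= 1 by rewrite !ltW.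
have K := Kbound t t0 t1.
set F := fun i l => kl (e i l) (zt t g e i l) - (e i l - zt t g e i l).
have Fge : forall i l, 0 <= F i l.
  move=> i l; rewrite /F subr_ge0; apply: kl_lb.
  - exact: (proj1 (he i) l).
  - rewrite /zt; apply: addr_ge0; apply: mulr_ge0.
    + by lra.
    + exact: (proj1 (hg i) l).
    + exact: ltW.
    + exact: (proj1 (he i) l).
  - move=> ei; have ep : 0 < e i l by rewrite lt_def ei (proj1 (he i) l).
    rewrite /zt; apply: ltr_wpDl; last exact: mulr_gt0.
    apply: mulr_ge0; first by lra.
    exact: (proj1 (hg i) l).
have := dsum_ge_term F i0 l0 Fge.
rewrite /F dsumB (dsum_rows _ _ he (simplex_zt _ _ _ ht hg he)) subr0.
have -> : zt t g e i0 l0 = t * e0 by rewrite /zt gz mulr0 add0r.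
rewrite kl_t // /t expRK mulrN opprK.
have -> : e0 * s = `|C| + 1 + e0.
  by rewrite /s mulrDr mulr1 mulrC divfK // gt_eqF.
move=> H; have := ler_norm C; have : 0 <= t * e0 by rewrite mulr_ge0 // ltW.
rewrite -/t -/e0 in H; move: K; rewrite -/C => K; lra.
Qed.

Lemma part1 : dsum (fun i l => kl (e i l) (g i l)) <= negent e - negent g.
Proof.
have hg := proj1 hgP.
apply: (lim0 _ _ (dsum (fun i l => Mt (e i l) (g i l)))) => t /andP[t0 t1].
have := Kbound t t0 t1.
have : dsum (fun i l => kl (e i l) (g i l) - t * Mt (e i l) (g i l))
   <= dsum (fun i l => kl (e i l) (zt t g e i l)).
  apply: ler_dsum => i l; apply: kl_step => //.
  - exact: (proj1 (hg i) l).
  - exact: (proj1 (he i) l).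
  - exact: g_pos.
rewrite dsumB dsumZ; lra.
Qed.
End Main.
From HB Require Import structures.
From mathcomp Require Import all_boot all_order all_algebra.
From mathcomp Require Import all_classical all_reals.
From mathcomp Require Import ereal sequences exp.
From mathcomp Require Import ring lra.
Import Order.TTheory GRing.Theory Num.Theory.
Local Open Scope ring_scope.

Section P2.
Context {R : realType} {n k p : nat}.
Variable h : rules n k p.
Variable th : 'I_(p + k) -> R.
Hypothesis hk0 : (0 < k)%N.

Definition Zs (i : 'I_n) : R := \sum_(l < k) expR (atheta h th i l).

Lemma Zs_gt0 i : 0 < Zs i.
Proof.
apply: lt_le_trans (expR_gt0 (atheta h th i (Ordinal hk0))) _.
by apply: (@sum_ge_term _ _ (fun l => expR (atheta h th i l))) => l; exact: expR_ge0.
Qed.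

Lemma gth_pos i l : 0 < gtheta h th i l.
Proof. by rewrite /gtheta divr_gt0 ?expR_gt0 //; exact: Zs_gt0. Qed.

Lemma ln_gth i l : ln (gtheta h th i l) = atheta h th i l - ln (Zs i).
Proof. by rewrite /gtheta ln_div ?posrE ?expR_gt0 ?Zs_gt0 // expRK. Qed.

Lemma simplex_gth : in_simplex (gtheta h th).
Proof.
move=> i; split; first by move=> l; exact: ltW (gth_pos i l).
by rewrite /gtheta -mulr_suml divff // gt_eqF // Zs_gt0.
Qed.

Lemma dsum_lnG (z : vec R n k) : in_simplex z ->
  dsum (fun i l => z i l * ln (gtheta h th i l))
  = dsum (fun i l => z i l * atheta h th i l) - \sum_i ln (Zs i).
Proof.
move=> hz; rewrite /dsum -sumrB; apply: eq_bigr => i _.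
under eq_bigr do rewrite ln_gth mulrBr.
by rewrite sumrB -mulr_suml (proj2 (hz i)) mul1r.
Qed.

Lemma dsum_za (z : vec R n k) :
  dsum (fun i l => z i l * atheta h th i l) = \sum_r th r * Amul h z r.
Proof.
rewrite /dsum /Amul /atheta.
transitivity (\sum_i \sum_r \sum_l z i l * (th r * Arow _ h r i l)).
  apply: eq_bigr => i _; under eq_bigr do rewrite mulr_sumr.
  by rewrite exchange_big.
rewrite exchange_big; apply: eq_bigr => r _; rewrite mulr_sumr; apply: eq_bigr => i _.
rewrite mulr_sumr; apply: eq_bigr => l _.
by rewrite mulrCA [z i l * _]mulrC.
Qed.
End P2.

Section P2b.
Context {R : realType} {n k p : nat}.
Variable h : rules n k p.
Variable th : 'I_(p + k) -> R.
Hypothesis hk0 : (0 < k)%N.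
Variables (e g : vec R n k) (b eps : 'I_(p + k) -> R).
Hypothesis he : in_simplex e.
Hypothesis hb : forall r, b r - eps r <= Amul h e r <= b r + eps r.
Hypothesis hgP : inP h b eps g.

Lemma kl_split (a c : R) : 0 <= a -> 0 < c -> kl a c = xlnx a - a * ln c.
Proof.
move=> a0 c0; rewrite /kl /xlnx; have [->|an0] := eqVneq a 0; first by rewrite mul0r subr0.
have ap : 0 < a by rewrite lt_def an0 a0.
by rewrite ln_div ?posrE // mulrBr.
Qed.

Lemma part2 : negent e - negent g <=
  dsum (fun i l => kl (e i l) (gtheta h th i l)) + 2 * dot_abs eps th.
Proof.
have hg := proj1 hgP.
have Gp := gth_pos h th hk0.
have hG := simplex_gth h th hk0.
have E1 : dsum (fun i l => kl (e i l) (gtheta h th i l))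
   = negent e - dsum (fun i l => e i l * ln (gtheta h th i l)).
  rewrite negent_dsum -dsumB; apply: eq_bigr => i _; apply: eq_bigr => l _.
  by apply: kl_split => //; exact: (proj1 (he i) l).
have Gi : dsum (fun i l => g i l * ln (gtheta h th i l)) <= negent g.
  have : dsum (fun i l => g i l * ln (gtheta h th i l))
     <= dsum (fun i l => xlnx (g i l) + (gtheta h th i l - g i l)).
    apply: ler_dsum => i l; apply: gibbs_term => //; exact: (proj1 (hg i) l).
  by rewrite dsumD (dsum_rows _ _ hG hg) addr0.
rewrite (dsum_lnG h th hk0 _ hg) (dsum_za h th) in Gi.
rewrite E1 (dsum_lnG h th hk0 _ he) (dsum_za h th).
have B : - (2 * dot_abs eps th) <= \sum_r th r * Amul h g r - \sum_r th r * Amul h e r.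
  rewrite -sumrB /dot_abs mulr_sumr -sumrN; apply: ler_sum => r _.
  set y := Amul h g r - Amul h e r.
  have hy : `|y| <= 2 * eps r.
    rewrite ler_norml /y; move: (hb r) (proj2 hgP r) => /andP[a1 a2] /andP[b1 b2].
    apply/andP; split; lra.
  have H1 : - `|th r * y| <= th r * y.
    by have := ler_norm (- (th r * y)); rewrite normrN; lra.
  rewrite normrM in H1.
  have := ler_wpM2l (normr_ge0 (th r)) hy.
  rewrite -mulrBr -/y; lra.
lra.
Qed.
End P2b.
From HB Require Import structures.
From mathcomp Require Import all_boot all_order all_algebra.
From mathcomp Require Import all_classical all_reals.
From mathcomp Require Import ereal sequences exp.
From mathcomp Require Import ring lra.
Import Order.TTheory GRing.Theory Num.Theory.
Local Open Scope ring_scope.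

Lemma klterm_eq {R : realType} (a c : R) : (a != 0 -> c != 0) -> klterm a c = (kl a c)%:E.
Proof.
move=> H; rewrite /klterm /kl; have [az|an0] := eqVneq a 0; first by [].
by rewrite (negbTE (H an0)).
Qed.

Lemma dKL_fin {R : realType} {n k : nat} (mu nu : vec R n k) :
  (forall i l, mu i l != 0 -> nu i l != 0) ->
  dKL mu nu = (dsum (fun i l => kl (mu i l) (nu i l)))%:E.
Proof.
move=> H; rewrite /dKL /dsum -sumEFin; apply: eq_bigr => i _.
rewrite -sumEFin; apply: eq_bigr => l _; exact: klterm_eq (H i l).
Qed.

Lemma dot_le {R : realType} {k p : nat} (eps th : 'I_(p + k) -> R) :
  dot_abs eps th <= norm_inf eps * norm_1 th.
Proof.
rewrite /dot_abs /norm_1 mulr_sumr; apply: ler_sum => r _.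
apply: ler_wpM2r; first exact: normr_ge0.
apply: le_trans (ler_norm (eps r)) _.
exact: (le_bigmax 0 (fun r => `|eps r|) r).
Qed.

Theorem mainTheorem8 (R : realType) (n k p : nat)
  (hn : (1 <= n)%N) (hk : (2 <= k)%N) (hp : (1 <= p)%N)
  (h : rules n k p) (hnj : forall j, (1 <= nj h j)%N)
  (eta : vec R n k) (heta : in_simplex eta)
  (b eps : 'I_(p + k) -> R) (heps : forall r, 0 <= eps r)
  (hb : forall r, b r - eps r <= Amul h eta r <= b r + eps r)
  (gbf : vec R n k) (hgbfP : inP h b eps gbf)
  (hgbfmin : forall z, inP h b eps z -> negent gbf <= negent z)
  (V : R) (hV : V = negent gbf)
  (thref : 'I_(p + k) -> R) :
  [/\ (dKL eta gbf <= (- V + negent eta)%:E)%E,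
      ((- V + negent eta)%:E <= dKL eta (gtheta h thref) + (2 * dot_abs eps thref)%:E)%E
    & (dKL eta (gtheta h thref) + (2 * dot_abs eps thref)%:E
        <= dKL eta (gtheta h thref) + (2 * norm_inf eps * norm_1 thref)%:E)%E].
Proof.
have hk0 : (0 < k)%N by apply: leq_trans hk.
subst V.
have gpos : forall i l, eta i l != 0 -> 0 < gbf i l by move=> i l; apply: g_pos.
have P1 : dsum (fun i l => kl (eta i l) (gbf i l)) <= negent eta - negent gbf.
  by apply: part1.
have P2 : negent eta - negent gbf <=
  dsum (fun i l => kl (eta i l) (gtheta h thref i l)) + 2 * dot_abs eps thref.
  by apply: part2.
have D1 : dKL eta gbf = (dsum (fun i l => kl (eta i l) (gbf i l)))%:E.
  by apply: dKL_fin => i l /gpos/gt_eqF ->.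
have D2 : dKL eta (gtheta h thref) = (dsum (fun i l => kl (eta i l) (gtheta h thref i l)))%:E.
  by apply: dKL_fin => i l _; rewrite gt_eqF // gth_pos.
split.
- by rewrite D1 lee_fin; lra.
- by rewrite D2 -EFinD lee_fin; lra.
- rewrite D2 -!EFinD lee_fin lerD2l -mulrA ler_wpM2l //; exact: dot_le.
Qed.
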